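(* Let $d\ge 2$ and $C_1>0$. There exist constants $C_2>1$ and $c\in(0,1)$, depending only on $d$ and $C_1$, such that the following holds for every finite field $\mathbb F_q$ of characteristic greater than two. Let $E,F\subset\mathbb F_q^d$ and $0\le\beta\le1$, and assume $\max_{x\in\mathbb F_q^d\setminus\{0\}}|E\cap l_x|\le C_1 q^{\beta}$. If $|E||F|\ge C_2\, q^{d+\beta}$, then $|\Pi(E,F)|\ge c\,q$.
   Context: $\mathbb F_q$ is a finite field with $q$ elements and characteristic greater than two; $\mathbb F_q^*=\mathbb F_q\setminus\{0\}$. For $x\in\mathbb F_q^d\setminus\{0\}$, $l_x=\{sx: s\in\mathbb F_q^*\}$. For $E,F\subset\mathbb F_q^d$, $\Pi(E,F)=\{x\cdot y: x\in E,\ y\in F\}$ with $x\cdot y=\sum_i x_iy_i$. *)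

(* Defs.v *)
From mathcomp Require Import all_boot all_algebra all_field.
From Stdlib Require Import Reals.
Set Implicit Arguments. Unset Strict Implicit. Unset Printing Implicit Defensive.
Import GRing.Theory.
Local Open Scope ring_scope.

Definition dotv (F : finFieldType) (d : nat) (x y : 'rV[F]_d) : F :=
  \sum_(i < d) x 0 i * y 0 i.

Definition linex (F : finFieldType) (d : nat) (x : 'rV[F]_d) : {set 'rV[F]_d} :=
  [set s *: x | s in [set s : F | s != 0]].

Definition Pi (F : finFieldType) (d : nat) (E G : {set 'rV[F]_d}) : {set F} :=
  [set dotv x y | x in E, y in G].

(* Main.v *)
Require Import Defs.
From mathcomp Require Import all_boot all_algebra all_field.
From Stdlib Require Import Reals.
Import GRing.Theory.
From mathcomp Require Import all_order.
From mathcomp Require algebra_tactics.ring.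

Module Aux.
Import mathcomp.algebra_tactics.ring.
Set Implicit Arguments. Unset Strict Implicit. Unset Printing Implicit Defensive.
Import Order.TTheory GRing.Theory Num.Theory.
Local Open Scope ring_scope.

Lemma sum_quad (I : finType) (A : pred I) (f : I -> int) (a b c : int) :
  \sum_(i in A) (a * f i ^+ 2 + b * f i + c) =
  a * \sum_(i in A) f i ^+ 2 + b * \sum_(i in A) f i + #|A|%:R * c.
Proof.
by rewrite !big_split /= -!mulr_sumr sumr_const mulr_natl.
Qed.

Lemma cauchy_schwarz (I : finType) (A : pred I) (f : I -> int) :
  (\sum_(i in A) f i) ^+ 2 <= #|A|%:R * \sum_(i in A) f i ^+ 2.
Proof.
set n : int := #|A|%:R; set Sm := \sum_(i in A) f i; set Q := \sum_(i in A) f i ^+ 2.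
have H : 0 <= \sum_(i in A) (n * f i - Sm) ^+ 2.
  by apply: sumr_ge0 => i _; exact: sqr_ge0.
have E : \sum_(i in A) (n * f i - Sm) ^+ 2 = n * (n * Q - Sm ^+ 2).
  rewrite (eq_bigr (fun i => (n^+2) * f i ^+ 2 + (- (2 * n * Sm)) * f i + Sm ^+ 2)); last first.
    by move=> i _; ring.
  rewrite sum_quad -/Sm -/Q -/n; ring.
have n0 : 0 <= n by rewrite /n ler0n.
case: (n =P 0) => [n00|/eqP nn0].
  have -> : Sm = 0.
    rewrite /Sm big1 // => i Ai.
    by move: n00; rewrite /n (cardD1 i) Ai => /eqP; rewrite pnatr_eq0.
  by rewrite expr0n /= n00 mul0r.
have np : 0 < n by rewrite lt0r nn0.
rewrite E in H; rewrite -subr_ge0; by rewrite pmulr_rge0 in H.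
Qed.

Section Main.
Variables (F : finFieldType) (d : nat).
Local Notation V := 'rV[F]_d.

Lemma dotvZl (s : F) (x y : V) : dotv (s *: x) y = s * dotv x y.
Proof. by rewrite /dotv mulr_sumr; apply: eq_bigr => i _; rewrite mxE mulrA. Qed.

Lemma dotvDl (x z y : V) : dotv (x + z) y = dotv x y + dotv z y.
Proof. by rewrite /dotv -big_split; apply: eq_bigr => i _; rewrite mxE mulrDl. Qed.

Lemma dotvBr (z y y' : V) : dotv z y - dotv z y' = dotv z (y - y').
Proof. by rewrite /dotv -sumrB; apply: eq_bigr => i _; rewrite !mxE mulrBr. Qed.

Lemma dotv0r (z : V) : dotv z 0 = 0.
Proof. by rewrite /dotv big1 // => i _; rewrite mxE mulr0. Qed.

Lemma dotv_delta (i : 'I_d) (w : V) : dotv (delta_mx 0 i) w = w 0 i.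
Proof.
rewrite /dotv (bigD1 i) //= big1 ?addr0; first by rewrite mxE !eqxx mul1r.
by move=> j /negbTE ji; rewrite mxE ji andbF mul0r.
Qed.

Definition ind (b : bool) : int := b%:R.

Lemma ind_true : ind true = 1. Proof. by []. Qed.
Lemma ind_ge0 b : 0 <= ind b. Proof. by case: b. Qed.

Lemma sum_ind_eq (T : finType) (c : T) : \sum_(t : T) ind (c == t) = 1.
Proof.
rewrite (bigD1 c) //= big1 ?addr0 ?eqxx //.
by move=> t tc; rewrite eq_sym (negbTE tc).
Qed.

Lemma sum_ind_eq2 (T : finType) (a b : T) :
  \sum_(t : T) ind (a == t) * ind (b == t) = ind (a == b).
Proof.
rewrite (bigD1 a) //= big1 ?addr0 ?eqxx ?mul1r 1?eq_sym //.
by move=> t ta; rewrite eq_sym (negbTE ta) mul0r.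
Qed.

Definition q : int := #|F|%:R.
Definition Vc : int := #|{: V}|%:R.

Lemma level_const (w : V) : w != 0 -> forall t : F,
  \sum_(z : V) ind (dotv z w == t) = \sum_(z : V) ind (dotv z w == 0).
Proof.
move=> /eqP w0 t.
have [i wi] : exists i, w 0 i != 0.
  case: (pickP (fun i => w 0 i != 0)) => [i wi|H]; first by exists i.
  by exfalso; apply: w0; apply/rowP => j; rewrite mxE; move: (H j) => /negbFE/eqP.
set z0 : V := (w 0 i)^-1 *: delta_mx 0 i.
have hz0 : dotv z0 w = 1 by rewrite dotvZl dotv_delta mulVf.
rewrite (reindex_inj (addIr (t *: z0))) /=.
apply: eq_bigr => z _; congr ind.
by rewrite dotvDl dotvZl hz0 mulr1 -{2}(add0r t) (inj_eq (addIr t)).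
Qed.

Lemma level_count (w : V) :
  q * \sum_(z : V) ind (dotv z w == 0) = Vc + (q - 1) * Vc * ind (w == 0).
Proof.
case: (w =P 0) => [->|/eqP w0].
  rewrite [ind true]/ind mulr1 (eq_bigr (fun _ => 1)); last by move=> z _; rewrite dotv0r eqxx.
  rewrite sumr_const /Vc mulr_natr; ring.
rewrite [ind false]/ind mulr0 addr0.
have E1 : \sum_(t : F) \sum_(z : V) ind (dotv z w == t) = Vc.
  rewrite exchange_big /= (eq_bigr (fun _ => 1)); last by move=> z _; exact: sum_ind_eq.
  by rewrite sumr_const.
have E2 : \sum_(t : F) \sum_(z : V) ind (dotv z w == t) =
    \sum_(t : F) \sum_(z : V) ind (dotv z w == 0).
  by apply: eq_bigr => t _; exact: level_const w0 t.
by rewrite -E1 E2 sumr_const /q mulr_natl.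
Qed.


Lemma sum_quadT (I : finType) (f : I -> int) (a b c : int) :
  \sum_(i : I) (a * f i ^+ 2 + b * f i + c) =
  a * \sum_(i : I) f i ^+ 2 + b * \sum_(i : I) f i + #|I|%:R * c.
Proof.
by rewrite !big_split /= -!mulr_sumr sumr_const mulr_natl.
Qed.

Variable G : {set V}.
Definition g : int := #|G|%:R.
Definition a (z : V) (t : F) : int := \sum_(y in G) ind (dotv z y == t).

Lemma sum_a z : \sum_t a z t = g.
Proof.
rewrite /a exchange_big /= (eq_bigr (fun _ => 1)) ?sumr_const //.
by move=> y _; exact: sum_ind_eq.
Qed.

Lemma diag_count y : y \in G -> \sum_(y' in G) ind (y - y' == 0) = 1.
Proof.
move=> yG; rewrite (bigD1 y) //= subrr eqxx big1 ?addr0 //.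
by move=> y' /andP [_ ny]; rewrite subr_eq0 eq_sym (negbTE ny).
Qed.

Lemma sqa z : \sum_t a z t ^+ 2 =
   \sum_(y in G) \sum_(y' in G) ind (dotv z (y - y') == 0).
Proof.
transitivity (\sum_t \sum_(y in G) \sum_(y' in G) ind (dotv z y == t) * ind (dotv z y' == t)).
  apply: eq_bigr => t _; rewrite expr2 /a mulr_suml; apply: eq_bigr => y _.
  by rewrite mulr_sumr.
rewrite exchange_big; apply: eq_bigr => y _; rewrite exchange_big.
apply: eq_bigr => y' _; by rewrite sum_ind_eq2 -dotvBr subr_eq0.
Qed.

Lemma qS : q * \sum_z \sum_t a z t ^+ 2 = g ^+ 2 * Vc + g * (q - 1) * Vc.
Proof.
under eq_bigr => z _ do rewrite sqa.
rewrite exchange_big /= mulr_sumr.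
rewrite (eq_bigr (fun y => g * Vc + (q - 1) * Vc)); last first.
  move=> y yG; rewrite exchange_big /= mulr_sumr.
  under eq_bigr => y' _ do rewrite level_count.
  rewrite big_split /= -mulr_sumr diag_count // sumr_const /g mulr1.
  by rewrite mulr_natl.
by rewrite sumr_const /g -mulr_natl; ring.
Qed.

Definition Phi z := \sum_t (q * a z t - g) ^+ 2.

Lemma Phi_ge0 z : 0 <= Phi z.
Proof. by apply: sumr_ge0 => t _; exact: sqr_ge0. Qed.

Lemma sum_Phi : \sum_z Phi z = q * g * (q - 1) * Vc.
Proof.
have E z : Phi z = q ^+ 2 * \sum_t a z t ^+ 2 - q * g ^+ 2.
  rewrite /Phi (eq_bigr (fun t => q ^+ 2 * a z t ^+ 2 + (- (2 * q * g)) * a z t + g ^+ 2)).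
    by rewrite sum_quadT sum_a -/q; ring.
  by move=> t _; ring.
rewrite (eq_bigr _ (fun z _ => E z)) sumrB -mulr_sumr sumr_const -/Vc.
have := qS; set S := \sum_z _ => HS.
rewrite mulr_natr. 
have -> : q ^+ 2 * S = q * (q * S) by ring.
rewrite HS /Vc; ring.
Qed.


Lemma a_scale s z t : s != 0 -> a (s *: z) t = a z (t / s).
Proof.
move=> s0; rewrite /a; apply: eq_bigr => y _; congr ind; rewrite dotvZl.
apply/eqP/eqP => [<-|->]; first by rewrite mulrAC divff // mul1r.
by rewrite mulrC divfK.
Qed.

Lemma Phi_scale s z : s != 0 -> Phi (s *: z) = Phi z.
Proof.
move=> s0; rewrite /Phi (reindex_inj (mulfI s0)) /=; apply: eq_bigr => t _.
by rewrite a_scale // mulrAC divff // mul1r.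
Qed.

Lemma sum_nz (c : int) : \sum_(s : F | s != 0) c = (q - 1) * c.
Proof.
have := sumr_const [pred s : F | true] c. 
rewrite (bigD1 0) //= => H.
have -> : \sum_(s : F | s != 0) c = c *+ #|[pred s : F | true]| - c.
  by rewrite -H; ring.
by rewrite /q -mulr_natl; ring.
Qed.

Variable E : {set V}.
Hypothesis E0 : 0 \notin E.
Variable M : nat.
Hypothesis HM : forall z, z != 0 -> (#|E :&: linex z| <= M)%nat.

Lemma nzE x : x \in E -> x != 0.
Proof. by move=> xE; apply/eqP => x0; move: xE; rewrite x0 (negbTE E0). Qed.

Lemma c_bound z : \sum_(x in E) \sum_(s : F | s != 0) ind (z == s *: x) <= M%:R.
Proof.
case: (z =P 0) => [->|/eqP z0].
  rewrite big1 ?ler0n // => x xE; rewrite big1 // => s s0.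
  by rewrite eq_sym scaler_eq0 (negbTE s0) (negbTE (nzE xE)).
apply: (@le_trans _ _ (\sum_(x in E) ind (x \in linex z))).
  apply: ler_sum => x xE.
  case: (pickP (fun s => (s != 0) && (z == s *: x))) => [s0 /andP [s00 /eqP zs0] | H].
    have -> : x \in linex z.
      apply/imsetP; exists s0^-1; first by rewrite inE invr_eq0.
      by rewrite zs0 scalerK.
    rewrite ind_true big_mkcond /= -(sum_ind_eq s0); apply: ler_sum => s _.
    case: ifP => _; last exact: ind_ge0.
    rewrite zs0 -subr_eq0 -scalerBl scaler_eq0 subr_eq0 (negbTE (nzE xE)) orbF.
    by [].
  rewrite big1; first exact: ind_ge0.
  by move=> s s0; have := H s; rewrite s0 /= => ->.
have -> : \sum_(x in E) ind (x \in linex z) = \sum_(x in E :&: linex z) 1.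
  rewrite [RHS]big_mkcond [LHS]big_mkcond /=; apply: eq_bigr => x _.
  by rewrite inE; case: (x \in E); case: (x \in linex z).
by rewrite sumr_const ler_nat; apply: HM.
Qed.

Lemma key_G : (q - 1) * \sum_(x in E) Phi x <= M%:R * \sum_z Phi z.
Proof.
have E1 : (q - 1) * \sum_(x in E) Phi x =
   \sum_z (\sum_(x in E) \sum_(s : F | s != 0) ind (z == s *: x)) * Phi z.
  rewrite mulr_sumr.
  transitivity (\sum_(x in E) \sum_(s : F | s != 0) \sum_z ind (z == s *: x) * Phi z).
    apply: eq_bigr => x _; rewrite -sum_nz; apply: eq_bigr => s s0.
    rewrite (bigD1 (s *: x)) //= eqxx mul1r big1 ?addr0 ?Phi_scale //.
    by move=> z zs; rewrite (negbTE zs) mul0r.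
  rewrite [RHS](eq_bigr (fun z => \sum_(x in E) \sum_(s : F | s != 0)
        ind (z == s *: x) * Phi z)); last first.
    by move=> z _; rewrite mulr_suml; apply: eq_bigr => x _; rewrite mulr_suml.
  rewrite [RHS]exchange_big /=; apply: eq_bigr => x _.
  by rewrite [RHS]exchange_big.
rewrite E1 mulr_sumr; apply: ler_sum => z _.
rewrite [M%:R * _]mulrC [_ * Phi z]mulrC. exact: (ler_wpM2l (Phi_ge0 z) (c_bound z)).
Qed.


Definition nu t := \sum_(x in E) a x t.
Definition N : int := #|E|%:R * g.

Lemma sum_nu : \sum_t nu t = N.
Proof.
rewrite /nu exchange_big /= (eq_bigr (fun _ => g)); last by move=> x _; exact: sum_a.
by rewrite sumr_const /N mulr_natl.
Qed.

Lemma q_gt1 : 1 < q.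
Proof. by rewrite /q ltr1n; exact: finNzRing_gt1. Qed.

Lemma H_step : q ^+ 2 * \sum_t nu t ^+ 2 - q * N ^+ 2 <= #|E|%:R * \sum_(x in E) Phi x.
Proof.
have E1 : \sum_t (q * nu t - N) ^+ 2 = q ^+ 2 * \sum_t nu t ^+ 2 - q * N ^+ 2.
  rewrite (eq_bigr (fun t => q ^+ 2 * nu t ^+ 2 + (- (2 * q * N)) * nu t + N ^+ 2)).
    by rewrite sum_quadT sum_nu -/q; ring.
  by move=> t _; ring.
rewrite -E1.
have E2 t : q * nu t - N = \sum_(x in E) (q * a x t - g).
  by rewrite sumrB -mulr_sumr sumr_const /N mulr_natl.
under eq_bigr => t _ do rewrite E2.
rewrite /Phi exchange_big /= mulr_sumr; apply: ler_sum => t _.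
exact: cauchy_schwarz.
Qed.

Lemma main_int : q * \sum_t nu t ^+ 2 <= N ^+ 2 + M%:R * N * Vc.
Proof.
have q1 := q_gt1.
have K := key_G; rewrite sum_Phi in K.
have K2 : \sum_(x in E) Phi x <= M%:R * q * g * Vc.
  have q10 : 0 < q - 1 by rewrite subr_gt0.
  rewrite -(ler_pM2l q10); apply: (le_trans K); rewrite le_eqVlt; apply/orP; left; apply/eqP; ring.
have H := H_step.
have nE : 0 <= (#|E|%:R : int) by [].
have H2 : q ^+ 2 * \sum_t nu t ^+ 2 - q * N ^+ 2 <= q * (M%:R * N * Vc).
  apply: (le_trans H); rewrite /N.
  have -> : q * (M%:R * (#|E|%:R * g) * Vc) = #|E|%:R * (M%:R * q * g * Vc) by ring.
  exact: ler_wpM2l.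
have q0 : 0 < q by apply: lt_trans q1.
rewrite -(ler_pM2l q0) mulrA -expr2; move: H2; rewrite lerBlDr => H2.
apply: (le_trans H2); rewrite le_eqVlt; apply/orP; left; apply/eqP; ring.
Qed.

Lemma nu_out t : t \notin Pi E G -> nu t = 0.
Proof.
move=> tP; rewrite /nu big1 // => x xE; rewrite /a big1 // => y yG.
case: eqP => // e; move: tP; rewrite -e /Pi.
by move/negP; case; apply/imset2P; exists x y.
Qed.

Lemma nu_ge0 t : 0 <= nu t.
Proof. by apply: sumr_ge0 => x _; apply: sumr_ge0 => y _; exact: ind_ge0. Qed.

Lemma final_int : q * N ^+ 2 <= #|Pi E G|%:R * (N ^+ 2 + M%:R * N * Vc).
Proof.
have E1 : N = \sum_(t in Pi E G) nu t.
  rewrite -sum_nu [RHS]big_mkcond /=; apply: eq_bigr => t _.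
  by case: ifP => // /negbT /nu_out ->.
have CS := cauchy_schwarz (mem (Pi E G)) nu.
rewrite -E1 in CS.
have S1 : \sum_(t in Pi E G) nu t ^+ 2 <= \sum_t nu t ^+ 2.
  rewrite [X in _ <= X](bigID (mem (Pi E G))) /= lerDl.
  by apply: sumr_ge0 => t _; exact: sqr_ge0.
have q0 : 0 < q by apply: lt_trans q_gt1.
apply: (@le_trans _ _ (q * (#|Pi E G|%:R * \sum_t nu t ^+ 2))).
  rewrite ler_pM2l //; apply: (le_trans CS); apply: ler_wpM2l => //.
rewrite mulrCA; apply: ler_wpM2l => //; exact: main_int.
Qed.


Lemma final_nat :
  (#|F| * (#|E| * #|G|) <= #|Pi E G| * (#|E| * #|G| + M * #|{: V}|))%nat.
Proof.
case: (posnP (#|E| * #|G|)) => [->|n0]; first by rewrite muln0.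
have H := final_int.
have Np : 0 < N by rewrite /N /g -natrM ltr0n.
have H2 : q * N <= #|Pi E G|%:R * (N + M%:R * Vc).
  rewrite -(ler_pM2l Np); apply: (le_trans _ (le_trans H _)).
    by rewrite le_eqVlt; apply/orP; left; apply/eqP; ring.
  by rewrite le_eqVlt; apply/orP; left; apply/eqP; ring.
move: H2; rewrite /q /N /g /Vc -!natrM -natrD -natrM ler_nat.
by [].
Qed.

End Main.

End Aux.
Import Aux.
From Stdlib Require Import Lra Psatz.

Lemma INR_leq (m n : nat) : (m <= n)%N -> (INR m <= INR n)%R.
Proof. by move/leP; apply: le_INR. Qed.

Lemma INR_expn (m n : nat) : INR (expn m n) = (INR m ^ n)%R.
Proof.
elim: n => [|n IH]; first by rewrite expn0.
by rewrite expnS mult_INR IH /=.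
Qed.

Theorem lemma2p3 :
  forall (d : nat) (C1 : R), (2 <= d)%N -> (0 < C1)%R ->
  exists (C2 c : R), (1 < C2)%R /\ (0 < c < 1)%R /\
    forall (F : finFieldType),
      (forall p : nat, p \in GRing.pchar F -> (2 < p)%N) ->
      forall (E G : {set 'rV[F]_d}) (beta : R),
        (0 <= beta <= 1)%R ->
        (forall x : 'rV[F]_d, x != GRing.zero ->
           (INR #|E :&: linex x| <= C1 * Rpower (INR #|F|) beta)%R) ->
        (INR #|E| * INR #|G| >= C2 * Rpower (INR #|F|) (INR d + beta))%R ->
        (INR #|Pi E G| >= c * INR #|F|)%R.
Proof.
move=> d C1 _ C1p.
exists (2 + 2 * C1)%R, (/2)%R; split; first lra.
split; first lra.
move=> F _ E G beta [b0 b1] HL HN.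
set E' := E :\ (GRing.zero : 'rV[F]_d).
set M := \max_(z : 'rV[F]_d | z != (GRing.zero : 'rV[F]_d)) #|E' :&: linex z|.
have E'0 : (GRing.zero : 'rV[F]_d) \notin E' by rewrite !inE eqxx.
have HM : forall z : 'rV[F]_d, z != (GRing.zero : 'rV[F]_d) -> (#|E' :&: linex z| <= M)%N.
  by move=> z z0; rewrite /M; exact: (@leq_bigmax_cond _ (fun z : 'rV[F]_d => z != GRing.zero) (fun z => #|E' :&: linex z|) z z0).
have key := final_nat G E'0 HM.
have hq1 : (1 < #|F|)%N by exact: finNzRing_gt1.
set Q := INR #|F|.
have Q2 : (2 <= Q)%R by have := @INR_leq _ _ hq1; rewrite /Q /=; lra.
have Q0 : (0 < Q)%R by lra.
set Y := Rpower Q beta.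
have Y1 : (1 <= Y)%R.
  by rewrite /Y -(Rpower_O _ Q0); apply: Rle_Rpower; lra.
set X := (Q ^ d)%R.
have X0 : (0 < X)%R by apply: pow_lt.
have hRp : Rpower Q (INR d + beta) = (X * Y)%R.
  by rewrite Rpower_plus Rpower_pow.
rewrite hRp in HN.
have hm : (INR M <= C1 * Y)%R.
  rewrite /M; apply: (big_ind (fun m => INR m <= C1 * Y)%R).
  - by rewrite /= ; nra.
  - move=> m1 m2 h1 h2; rewrite /maxn; by case: ifP.
  - move=> z z0; apply: Rle_trans (HL z z0); apply: INR_leq.
    by apply: subset_leq_card; apply: setSI; apply: subD1set.
have hV : INR #|{: 'rV[F]_d}| = X.
  by rewrite card_mx mul1n INR_expn.
have hG : (INR #|G| <= X)%R by rewrite -hV; apply: INR_leq; apply: max_card.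
have hE : (INR #|E| <= INR #|E'| + 1)%R.
  rewrite -S_INR; apply: INR_leq; rewrite (cardsD1 (GRing.zero : 'rV[F]_d) E) /E'.
  by case: ((GRing.zero : 'rV[F]_d) \in E).
have hP : (INR #|Pi E' G| <= INR #|Pi E G|)%R.
  apply: INR_leq; apply: subset_leq_card; apply/subsetP => t /imset2P [x y xE yG ->].
  by apply/imset2P; exists x y => //; move: xE; rewrite inE => /andP [].
move: key => /INR_leq; rewrite !mult_INR plus_INR !mult_INR hV -/Q => key.
set e' := INR #|E'| in hE key; set gg := INR #|G| in hG key HN.
set P' := INR #|Pi E' G| in hP key; set m := INR M in hm key.
have gg0 : (0 <= gg)%R by apply: pos_INR.
have P'0 : (0 <= P')%R by apply: pos_INR.
have m0 : (0 <= m)%R by apply: pos_INR.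
have h1 : (INR #|E| * gg <= (e' + 1) * gg)%R by apply: Rmult_le_compat_r.
have h2 : (X * 1 <= X * Y)%R by apply: Rmult_le_compat_l; lra.
have h5 : (0 < X * Y)%R by apply: Rmult_lt_0_compat; lra.
have h4 : (0 <= C1 * (X * Y))%R by apply: Rmult_le_pos; lra.
have h6 : (m * X <= (C1 * Y) * X)%R by apply: Rmult_le_compat_r; lra.
set n := (e' * gg)%R.
have hn : ((e' + 1) * gg = n + gg)%R by rewrite /n; ring.
have n1 : ((1 + 2 * C1) * (X * Y) <= n)%R.
  have -> : ((1 + 2 * C1) * (X * Y) = X * Y + 2 * (C1 * (X * Y)))%R by ring.
  have : ((2 + 2 * C1) * (X * Y) = 2 * (X * Y) + 2 * (C1 * (X * Y)))%R by ring.
  lra.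
have n2 : (m * X <= n)%R.
  have : ((C1 * Y) * X = C1 * (X * Y))%R by ring.
  lra.
have n3 : (0 < n)%R by lra.
have h7 : (P' * (m * X) <= P' * n)%R by apply: Rmult_le_compat_l.
have n4 : (Q * n <= (P' * 2) * n)%R.
  have : (P' * (n + m * X) = P' * n + P' * (m * X))%R by ring.
  have : ((P' * 2) * n = P' * n + P' * n)%R by ring.
  move: key; rewrite -/n => key.
  lra.
have n5 : (Q <= P' * 2)%R by apply: (Rmult_le_reg_r n).
lra.
Qed.
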